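(* For all $s,t\in\Lambda^\infty$: if $s$ has no head normal form and $t\to^\infty_{\beta\bot}s$, then $t$ has no head normal form.
   Context: Fix an infinite set $V$ of variables and a set $C$ of constants with $V\cap C=\emptyset$, containing a distinguished constant $\bot$. $\Lambda^\infty$ is the set of infinitary lambda-terms: all finite and infinite terms generated coinductively by $t ::= c\mid x\mid t\,t\mid\lambda x.t$, identified up to $\alpha$-equivalence; $s[t/x]$ is capture-avoiding substitution; $\equiv$ is identity; an atom is a variable or constant. For $R\subseteq\Lambda^\infty\times\Lambda^\infty$, the compatible closure $\to_R$ is the least relation with $(s,t)\in R\Rightarrow s\to_R t$ and $s\to_R s'\Rightarrow st\to_R s't,\ ts\to_R ts',\ \lambda x.s\to_R\lambda x.s'$. $\to_\beta$ is the compatible closure of $R_\beta=\{((\lambda x.s)t,s[t/x])\}$. A term is in head normal form (hnf) if it is $\lambda x_1\ldots x_m.\,a\,t_1\ldots t_n$ ($m,n\ge0$, $a$ an atom, $a\not\equiv\bot$); $t$ has a hnf if $t\to^*_\beta t'$ for some $t'$ in hnf. $R_\bot=\{(t,\bot)\mid t\text{ has no hnf}, t\not\equiv\bot\}$; $\to_{\beta\bot}$ is the compatible closure of $R_\beta\cup R_\bot$. The infinitary closure $\to^\infty_{\beta\bot}$ is the greatest relation such that whenever $s\to^\infty_{\beta\bot}t$ (writing $\to^*$ for the reflexive-transitive closure of $\to_{\beta\bot}$): $t\equiv a$ atom and $s\to^*a$; or $t\equiv t_1't_2'$, $s\to^*t_1t_2$, $t_i\to^\infty_{\beta\bot}t_i'$;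 or $t\equiv\lambda x.r'$, $s\to^*\lambda x.r$, $r\to^\infty_{\beta\bot}r'$. *)

(* Defs.v *)
(* Infinitary lambda-terms as a coinductive type with de Bruijn
   indices (alpha-equivalence is built in); identity (≡) is bisimilarity. *)
From Stdlib Require Import Arith.

Set Implicit Arguments.

Section InfLambda.

Context (C : Type) (bot : C).

CoInductive term : Type :=
| Const : C -> term
| Var : nat -> term
| App : term -> term -> term
| Lam : term -> term.

CoInductive bisim : term -> term -> Prop :=
| bis_const c : bisim (Const c) (Const c)
| bis_var n : bisim (Var n) (Var n)
| bis_app s t s' t' : bisim s s' -> bisim t t' -> bisim (App s t) (App s' t')
| bis_lam s s' : bisim s s' -> bisim (Lam s) (Lam s').

CoFixpoint lift (k : nat) (t : term) : term :=
  match t with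
  | Const c => Const c
  | Var n => if Nat.ltb n k then Var n else Var (S n)
  | App a b => App (lift k a) (lift k b)
  | Lam a => Lam (lift (S k) a)
  end.

(* capture-avoiding substitution of u (already lifted k times) for index k *)
CoFixpoint subst (k : nat) (u : term) (t : term) : term :=
  match t with
  | Const c => Const c
  | Var n => if Nat.ltb n k then Var n
             else if Nat.eqb n k then u else Var (pred n)
  | App a b => App (subst k u a) (subst k u b)
  | Lam a => Lam (subst (S k) (lift 0 u) a)
  end.

Definition R_beta (u v : term) : Prop :=
  exists s t, bisim u (App (Lam s) t) /\ bisim v (subst 0 t s).

Inductive compat (R : term -> term -> Prop) : term -> term -> Prop :=
| cp_base s t : R s t -> compat R s t
| cp_appl s s' t t' : compat R s s' -> bisim t t' -> compat R (App s t) (App s' t')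
| cp_appr s s' t t' : bisim t t' -> compat R s s' -> compat R (App t s) (App t' s')
| cp_lam s s' : compat R s s' -> compat R (Lam s) (Lam s').

Inductive star (R : term -> term -> Prop) : term -> term -> Prop :=
| star_refl s t : bisim s t -> star R s t
| star_step s u t : R s u -> star R u t -> star R s t.

Definition beta_step := compat R_beta.

Inductive head_app : term -> Prop :=
| ha_var n : head_app (Var n)
| ha_const c : c <> bot -> head_app (Const c)
| ha_app s t : head_app s -> head_app (App s t).

Inductive is_hnf : term -> Prop :=
| hnf_head t : head_app t -> is_hnf t
| hnf_lam s : is_hnf s -> is_hnf (Lam s).

Definition has_hnf (t : term) : Prop :=
  exists t', star beta_step t t' /\ is_hnf t'.

Definition R_bot (u v : term) : Prop :=
  ~ has_hnf u /\ ~ bisim u (Const bot) /\ bisim v (Const bot).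

Definition beta_bot_step := compat (fun u v => R_beta u v \/ R_bot u v).

Definition beta_bot_star := star beta_bot_step.

CoInductive inf_red : term -> term -> Prop :=
| ir_var s n : beta_bot_star s (Var n) -> inf_red s (Var n)
| ir_const s c : beta_bot_star s (Const c) -> inf_red s (Const c)
| ir_app s t1 t2 t1' t2' :
    beta_bot_star s (App t1 t2) -> inf_red t1 t1' -> inf_red t2 t2' ->
    inf_red s (App t1' t2')
| ir_lam s r r' :
    beta_bot_star s (Lam r) -> inf_red r r' -> inf_red s (Lam r').

End InfLambda.

(* Main.v *)
Require Import Defs.
From Stdlib Require Import Arith List Permutation Lia Classical ClassicalEpsilon Setoid Morphisms.
Import ListNotations.
Set Implicit Arguments.

Inductive ty := Base | Arr (M : list ty) (t : ty).

Definition ty_eq_dec (x y : ty) : {x = y} + {x <> y} := excluded_middle_informative (x = y).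

Ltac perm_to_count x :=
  repeat match goal with
  | H : Permutation _ _ |- _ =>
      let H' := fresh in pose proof (proj1 (Permutation_count_occ ty_eq_dec _ _) H x) as H'; clear H
  end.
Ltac psolve := let x := fresh "x" in
  apply (proj2 (Permutation_count_occ ty_eq_dec _ _)); intro x; perm_to_count x;
  repeat rewrite count_occ_app in *; simpl in *; lia.

Definition ctx := nat -> list ty.
Definition ceq (G H : ctx) := forall k, Permutation (G k) (H k).
Definition cempty : ctx := fun _ => [].
Definition cadd (G H : ctx) : ctx := fun k => G k ++ H k.
Definition csing (n : nat) (t : ty) : ctx := fun k => if Nat.eqb k n then [t] else [].
Definition ctail (G : ctx) : ctx := fun k => G (S k).
Definition cdel (j : nat) (G : ctx) : ctx := fun k => if Nat.ltb k j then G k else G (S k).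
Definition cins (j : nat) (G : ctx) : ctx :=
  fun k => if Nat.ltb k j then G k else if Nat.eqb k j then [] else G (pred k).

Lemma ceq_refl G : ceq G G. Proof. intro; reflexivity. Qed.
Lemma ceq_sym G H : ceq G H -> ceq H G. Proof. intros E k; symmetry; apply E. Qed.
Lemma ceq_trans G H I : ceq G H -> ceq H I -> ceq G I.
Proof. intros E F k; etransitivity; [apply E|apply F]. Qed.
#[export] Instance ceq_equiv : Equivalence ceq.
Proof. split; [exact ceq_refl|exact ceq_sym|exact ceq_trans]. Qed.
#[export] Instance cadd_proper : Proper (ceq ==> ceq ==> ceq) cadd.
Proof. intros a b E c d F k; unfold cadd; rewrite (E k), (F k); reflexivity. Qed.
#[export] Instance ctail_proper : Proper (ceq ==> ceq) ctail.
Proof. intros a b E k; apply E. Qed.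
#[export] Instance cdel_proper j : Proper (ceq ==> ceq) (cdel j).
Proof. intros a b E k; unfold cdel; destruct (Nat.ltb k j); apply E. Qed.
#[export] Instance cins_proper j : Proper (ceq ==> ceq) (cins j).
Proof. intros a b E k; unfold cins; destruct (Nat.ltb k j); [apply E|destruct (Nat.eqb k j); [reflexivity|apply E]]. Qed.

Lemma cadd_comm G H : ceq (cadd G H) (cadd H G).
Proof. intro k; unfold cadd; psolve. Qed.
Lemma cadd_assoc G H I : ceq (cadd G (cadd H I)) (cadd (cadd G H) I).
Proof. intro k; unfold cadd; psolve. Qed.
Lemma cadd_empty_l G : ceq (cadd cempty G) G.
Proof. intro k; reflexivity. Qed.
Lemma cadd_empty_r G : ceq (cadd G cempty) G.
Proof. intro k; unfold cadd, cempty; rewrite app_nil_r; reflexivity. Qed.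
Lemma cdel_cadd k G H : ceq (cdel k (cadd G H)) (cadd (cdel k G) (cdel k H)).
Proof. intro i; unfold cdel, cadd; destruct (Nat.ltb i k); reflexivity. Qed.
Lemma cins_cadd k G H : ceq (cins k (cadd G H)) (cadd (cins k G) (cins k H)).
Proof. intro i; unfold cins, cadd; destruct (Nat.ltb i k); [|destruct (Nat.eqb i k)]; reflexivity. Qed.
Lemma cdel0 G : ceq (cdel 0 G) (ctail G).
Proof. intro i; reflexivity. Qed.
Lemma ltb_SS a b : Nat.ltb (S a) (S b) = Nat.ltb a b.
Proof. reflexivity. Qed.

Lemma ctail_cins_S j G : ceq (ctail (cins (S j) G)) (cins j (ctail G)).
Proof. intro i; unfold ctail, cins; rewrite ltb_SS; simpl.
  destruct (i <? j) eqn:E1; [reflexivity|]. destruct (i =? j) eqn:E2; [reflexivity|].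
  apply Nat.ltb_ge in E1; apply Nat.eqb_neq in E2. destruct i; [lia|reflexivity]. Qed.
Lemma ctail_cdel_S j G : ceq (ctail (cdel (S j) G)) (cdel j (ctail G)).
Proof. intro i; unfold ctail, cdel; rewrite ltb_SS. destruct (Nat.ltb i j); reflexivity. Qed.
Lemma ctail_cins0 G : ceq (ctail (cins 0 G)) G.
Proof. intro i; reflexivity. Qed.
Lemma cins_empty j : ceq (cins j cempty) cempty.
Proof. intro i; unfold cins, cempty; destruct (Nat.ltb i j); [|destruct (Nat.eqb i j)]; reflexivity. Qed.
Lemma cdel_empty j : ceq (cdel j cempty) cempty.
Proof. intro i; unfold cdel, cempty; destruct (Nat.ltb i j); reflexivity. Qed.
Lemma ctail_empty : ceq (ctail cempty) cempty.
Proof. intro i; reflexivity. Qed.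

Lemma cins_sing_lt j n t : n < j -> ceq (cins j (csing n t)) (csing n t).
Proof. intros H i; unfold cins, csing.
  destruct (Nat.ltb i j) eqn:E1; [reflexivity|]. apply Nat.ltb_ge in E1.
  destruct (Nat.eqb i j) eqn:E2; [rewrite (proj2 (Nat.eqb_neq i n)) by lia; reflexivity|].
  rewrite (proj2 (Nat.eqb_neq i n)) by lia. rewrite (proj2 (Nat.eqb_neq (pred i) n)) by (apply Nat.eqb_neq in E2; lia). reflexivity. Qed.
Lemma cins_sing_ge j n t : j <= n -> ceq (cins j (csing n t)) (csing (S n) t).
Proof. intros H i; unfold cins, csing.
  destruct (Nat.ltb i j) eqn:E1; [apply Nat.ltb_lt in E1; rewrite (proj2 (Nat.eqb_neq i n)) by lia;
    rewrite (proj2 (Nat.eqb_neq i (S n))) by lia; reflexivity|]. apply Nat.ltb_ge in E1.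
  destruct (Nat.eqb i j) eqn:E2; [apply Nat.eqb_eq in E2; rewrite (proj2 (Nat.eqb_neq i (S n))) by lia; reflexivity|].
  apply Nat.eqb_neq in E2. destruct (Nat.eqb (pred i) n) eqn:E3.
  - apply Nat.eqb_eq in E3. rewrite (proj2 (Nat.eqb_eq i (S n))) by lia. reflexivity.
  - apply Nat.eqb_neq in E3. rewrite (proj2 (Nat.eqb_neq i (S n))) by lia. reflexivity. Qed.
Lemma cdel_sing_lt k n t : n < k -> ceq (cdel k (csing n t)) (csing n t).
Proof. intros H i; unfold cdel, csing. destruct (Nat.ltb i k) eqn:E1; [reflexivity|].
  apply Nat.ltb_ge in E1. rewrite (proj2 (Nat.eqb_neq i n)) by lia. rewrite (proj2 (Nat.eqb_neq (S i) n)) by lia. reflexivity. Qed.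
Lemma cdel_sing_gt k n t : k < n -> ceq (cdel k (csing n t)) (csing (pred n) t).
Proof. intros H i; unfold cdel, csing. destruct (Nat.ltb i k) eqn:E1.
  - apply Nat.ltb_lt in E1. rewrite (proj2 (Nat.eqb_neq i n)) by lia. rewrite (proj2 (Nat.eqb_neq i (pred n))) by lia. reflexivity.
  - apply Nat.ltb_ge in E1. destruct (Nat.eqb (S i) n) eqn:E2.
    + apply Nat.eqb_eq in E2. rewrite (proj2 (Nat.eqb_eq i (pred n))) by lia. reflexivity.
    + apply Nat.eqb_neq in E2. rewrite (proj2 (Nat.eqb_neq i (pred n))) by lia. reflexivity. Qed.
Lemma cdel_sing_eq k t : ceq (cdel k (csing k t)) cempty.
Proof. intros i; unfold cdel, csing, cempty. destruct (Nat.ltb i k) eqn:E1.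
  - apply Nat.ltb_lt in E1. rewrite (proj2 (Nat.eqb_neq i k)) by lia. reflexivity.
  - apply Nat.ltb_ge in E1. rewrite (proj2 (Nat.eqb_neq (S i) k)) by lia. reflexivity. Qed.

Section S.
Context (C : Type) (bot : C).
Notation term := (term C).

Definition frob (t : term) : term :=
  match t with Const c => Const c | Var _ n => Var _ n | App a b => App a b | Lam a => Lam a end.
Lemma frob_eq t : t = frob t. Proof. destruct t; reflexivity. Qed.

Lemma lift_var k n : lift k (Var _ n) = (if Nat.ltb n k then Var _ n else Var _ (S n) : term).
Proof. rewrite (frob_eq (lift k (Var _ n))); simpl. destruct (Nat.ltb n k); reflexivity. Qed.
Lemma lift_const k c : lift k (Const c : term) = Const c.
Proof. rewrite (frob_eq (lift k _)); reflexivity. Qed.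
Lemma lift_app k a b : lift k (App a b : term) = App (lift k a) (lift k b).
Proof. rewrite (frob_eq (lift k _)); reflexivity. Qed.
Lemma lift_lam k a : lift k (Lam a : term) = Lam (lift (S k) a).
Proof. rewrite (frob_eq (lift k _)); reflexivity. Qed.
Lemma subst_var k u n : subst k u (Var _ n) =
  (if Nat.ltb n k then Var _ n else if Nat.eqb n k then u else Var _ (pred n) : term).
Proof. rewrite (frob_eq (subst k u (Var _ n))); simpl.
  destruct (Nat.ltb n k); [reflexivity|]. destruct (Nat.eqb n k); [|reflexivity].
  symmetry; apply frob_eq. Qed.
Lemma subst_const k u c : subst k u (Const c : term) = Const c.
Proof. rewrite (frob_eq (subst k u _)); reflexivity. Qed.
Lemma subst_app k u a b : subst k u (App a b : term) = App (subst k u a) (subst k u b).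
Proof. rewrite (frob_eq (subst k u _)); reflexivity. Qed.
Lemma subst_lam k u a : subst k u (Lam a : term) = Lam (subst (S k) (lift 0 u) a).
Proof. rewrite (frob_eq (subst k u _)); reflexivity. Qed.

Lemma bisim_refl (t : term) : bisim t t.
Proof. revert t; cofix CH; intro t; destruct t; constructor; apply CH. Qed.
Lemma bisim_sym (t u : term) : bisim t u -> bisim u t.
Proof. revert t u; cofix CH; intros t u H; destruct H; constructor; apply CH; assumption. Qed.

Inductive typ : ctx -> term -> ty -> nat -> Prop :=
| t_var G n t k : ceq G (csing n t) -> typ G (Var _ n) t k
| t_const G c t k : c <> bot -> ceq G cempty -> typ G (Const c) t k
| t_lam G G' a M t n k : typ G' a t n -> Permutation M (G' 0) -> ceq G (ctail G') -> n < k ->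
    typ G (Lam a) (Arr M t) k
| t_app G G1 G2 f u M t n1 n2 k : typ G1 f (Arr M t) n1 -> typm G2 u M n2 -> ceq G (cadd G1 G2) ->
    n1 + n2 < k -> typ G (App f u) t k
with typm : ctx -> term -> list ty -> nat -> Prop :=
| tm_nil G u k : ceq G cempty -> typm G u [] k
| tm_cons G G1 G2 u s M n1 n2 k : typ G1 u s n1 -> typm G2 u M n2 -> ceq G (cadd G1 G2) ->
    n1 + n2 <= k -> typm G u (s :: M) k.
Scheme typ_ind2 := Induction for typ Sort Prop with typm_ind2 := Induction for typm Sort Prop.
Combined Scheme typ_mut from typ_ind2, typm_ind2.

Lemma typ_ceq G H t s n : typ G t s n -> ceq G H -> typ H t s n.
Proof. intros D E; destruct D.
  - apply t_var; rewrite <- E; assumption.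
  - apply t_const; [assumption| rewrite <- E; assumption].
  - eapply t_lam; eauto. rewrite <- E; assumption.
  - eapply t_app; eauto. rewrite <- E; assumption. Qed.
Lemma typm_ceq G H t M n : typm G t M n -> ceq G H -> typm H t M n.
Proof. intros D E; destruct D.
  - apply tm_nil; rewrite <- E; assumption.
  - eapply tm_cons; eauto. rewrite <- E; assumption. Qed.
Lemma typ_mono G t s n m : typ G t s n -> n <= m -> typ G t s m.
Proof. intros D E; destruct D; [constructor|constructor|eapply t_lam|eapply t_app]; eauto; lia. Qed.
Lemma typm_mono G t M n m : typm G t M n -> n <= m -> typm G t M m.
Proof. intros D E; destruct D; [constructor|eapply tm_cons]; eauto; lia. Qed.

Lemma typm_cons_inv G u s M n : typm G u (s :: M) n ->
  exists G1 G2 n1 n2, typ G1 u s n1 /\ typm G2 u M n2 /\ ceq G (cadd G1 G2) /\ n1 + n2 <= n.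
Proof. intro D; inversion D; subst; eauto 10. Qed.
Lemma typ_var_inv G m s n : typ G (Var _ m) s n -> ceq G (csing m s).
Proof. intro D; inversion D; subst; auto. Qed.
Lemma typ_const_inv G c s n : typ G (Const c) s n -> c <> bot /\ ceq G cempty.
Proof. intro D; inversion D; subst; auto. Qed.
Lemma typ_lam_inv G a s n : typ G (Lam a) s n ->
  exists G' M t n', s = Arr M t /\ typ G' a t n' /\ Permutation M (G' 0) /\ ceq G (ctail G') /\ n' < n.
Proof. intro D; inversion D; subst; eauto 10. Qed.
Lemma typ_app_inv G f u s n : typ G (App f u) s n ->
  exists G1 G2 M n1 n2, typ G1 f (Arr M s) n1 /\ typm G2 u M n2 /\ ceq G (cadd G1 G2) /\ n1 + n2 < n.
Proof. intro D; inversion D; subst; eauto 10. Qed.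

Lemma typm_perm M M' : Permutation M M' -> forall G u n, typm G u M n -> typm G u M' n.
Proof. induction 1; intros G u n D.
  - exact D.
  - apply typm_cons_inv in D as (G1 & G2 & n1 & n2 & D1 & D2 & E & L). eapply tm_cons; eauto.
  - apply typm_cons_inv in D as (G1 & G2 & n1 & n2 & D1 & D2 & E & L).
    apply typm_cons_inv in D2 as (G3 & G4 & n3 & n4 & D3 & D4 & E2 & L2).
    eapply tm_cons with (G1 := G3) (G2 := cadd G1 G4) (n2 := n1 + n4); eauto.
    + eapply tm_cons; [eassumption|eassumption|reflexivity|]. lia.
    + rewrite E, E2. rewrite !cadd_assoc. rewrite (cadd_comm G1 G3). reflexivity.
    + lia.
  - eauto. Qed.

Lemma typm_nil_inv G u n : typm G u [] n -> ceq G cempty.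
Proof. intro D; inversion D; subst; assumption. Qed.
Lemma typm_single_inv G u s n : typm G u [s] n -> exists n', typ G u s n' /\ n' <= n.
Proof. intro D; apply typm_cons_inv in D as (G1 & G2 & n1 & n2 & D1 & D2 & E & L).
  apply typm_nil_inv in D2. exists n1; split; [|lia].
  eapply typ_ceq; [eassumption|]. rewrite E, D2. symmetry; apply cadd_empty_r. Qed.
Lemma typ_typm G u s n : typ G u s n -> typm G u [s] n.
Proof. intro D; eapply tm_cons with (n2 := 0); [eassumption|apply tm_nil; reflexivity| |lia].
  symmetry; apply cadd_empty_r. Qed.

Lemma typm_app G1 G2 u M1 M2 n1 n2 : typm G1 u M1 n1 -> typm G2 u M2 n2 ->
  typm (cadd G1 G2) u (M1 ++ M2) (n1 + n2).
Proof. revert G1 n1; induction M1 as [|s M1 IH]; intros G1 n1 D D2; simpl.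
  - apply typm_nil_inv in D. eapply typm_ceq; [eapply typm_mono; [eassumption|lia]|]. rewrite D. symmetry; apply cadd_empty_l.
  - apply typm_cons_inv in D as (G3 & G4 & n3 & n4 & D3 & D4 & E & L).
    eapply tm_cons; [eassumption|apply IH; eassumption| |lia].
    rewrite E. symmetry; apply cadd_assoc. Qed.

Lemma typm_split M1 : forall M2 G u n, typm G u (M1 ++ M2) n ->
  exists G1 G2 n1 n2, typm G1 u M1 n1 /\ typm G2 u M2 n2 /\ ceq G (cadd G1 G2) /\ n1 + n2 <= n.
Proof. induction M1; intros M2 G u n D; simpl in *.
  - exists cempty, G, 0, n; repeat split; auto. apply tm_nil; reflexivity. symmetry; apply cadd_empty_l.
  - apply typm_cons_inv in D as (G1 & G2 & n1 & n2 & D1 & D2 & E0 & L0).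
    destruct (IHM1 _ _ _ _ D2) as (G3 & G4 & m1 & m2 & D3 & D4 & E & L).
    exists (cadd G1 G3), G4, (n1 + m1), m2; repeat split; auto.
    + eapply tm_cons; eauto. reflexivity.
    + rewrite E0, E. apply cadd_assoc.
    + lia. Qed.


Lemma typ_bisim : (forall G t s n, typ G t s n -> forall t', bisim t t' -> typ G t' s n) /\
                  (forall G t M n, typm G t M n -> forall t', bisim t t' -> typm G t' M n).
Proof. apply typ_mut.
  - intros G n t k E t' B. inversion B; subst; apply t_var; auto.
  - intros G c t k Hc E t' B. inversion B; subst; apply t_const; auto.
  - intros G G' a M t n k D IH P E L t' B. inversion B; subst. eapply t_lam; eauto.
  - intros G G1 G2 f u M t n1 n2 k D1 IH1 D2 IH2 E L t' B. inversion B; subst. eapply t_app; eauto.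
  - intros G u k E t' B. apply tm_nil; auto.
  - intros G G1 G2 u s M n1 n2 k D1 IH1 D2 IH2 E L t' B. eapply tm_cons; eauto. Qed.

Lemma typ_lift : (forall G t s n, typ G t s n -> forall j, typ (cins j G) (lift j t) s n) /\
                 (forall G t M n, typm G t M n -> forall j, typm (cins j G) (lift j t) M n).
Proof. apply typ_mut.
  - intros G n t k E j. rewrite lift_var. destruct (Nat.ltb n j) eqn:E1.
    + apply Nat.ltb_lt in E1. apply t_var. rewrite E. apply cins_sing_lt; auto.
    + apply Nat.ltb_ge in E1. apply t_var. rewrite E. apply cins_sing_ge; auto.
  - intros G c t k Hc E j. rewrite lift_const. apply t_const; auto. rewrite E; apply cins_empty.
  - intros G G' a M t n k D IH P E L j.
    rewrite lift_lam. eapply t_lam; [apply IH| |rewrite ctail_cins_S, E; reflexivity|exact L].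
    simpl. exact P.
  - intros G G1 G2 f u M t n1 n2 k D1 IH1 D2 IH2 E L j.
    rewrite lift_app. eapply t_app; [apply IH1|apply IH2| |exact L]. rewrite E; apply cins_cadd.
  - intros G u k E j. apply tm_nil. rewrite E; apply cins_empty.
  - intros G G1 G2 u s M n1 n2 k D1 IH1 D2 IH2 E L j.
    eapply tm_cons; [apply IH1|apply IH2| |exact L]. rewrite E; apply cins_cadd. Qed.

Lemma typ_unlift :
  (forall G t s n, typ G t s n -> forall j t0, t = lift j t0 -> exists G', ceq G (cins j G') /\ typ G' t0 s n) /\
  (forall G t M n, typm G t M n -> forall j t0, t = lift j t0 -> exists G', ceq G (cins j G') /\ typm G' t0 M n).
Proof. apply typ_mut.
  - intros G n t k E j t0 H.
    destruct t0; [rewrite lift_const in H; discriminate| |rewrite lift_app in H; discriminate|rewrite lift_lam in H; discriminate].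
    rewrite lift_var in H. exists (csing n0 t); split; [|apply t_var; reflexivity].
    destruct (Nat.ltb n0 j) eqn:E1; injection H as ->.
    + apply Nat.ltb_lt in E1. rewrite E, cins_sing_lt; auto. reflexivity.
    + apply Nat.ltb_ge in E1. rewrite E, cins_sing_ge; auto. reflexivity.
  - intros G c t k Hc E j t0 H.
    destruct t0; [|rewrite lift_var in H; destruct (Nat.ltb n j); discriminate|rewrite lift_app in H; discriminate|rewrite lift_lam in H; discriminate].
    rewrite lift_const in H. injection H as ->. exists cempty; split; [rewrite E, cins_empty; reflexivity|apply t_const; auto; reflexivity].
  - intros G G' a M t n k D IH P E L j t0 H.
    destruct t0; [rewrite lift_const in H; discriminate|rewrite lift_var in H; destruct (Nat.ltb n0 j); discriminate|rewrite lift_app in H; discriminate|].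
    rewrite lift_lam in H. injection H as H. destruct (IH _ _ H) as (G'' & E1 & D1).
    exists (ctail G''); split.
    + rewrite E, E1, ctail_cins_S. reflexivity.
    + eapply t_lam; [exact D1| |reflexivity|exact L]. rewrite P. apply (E1 0).
  - intros G G1 G2 f u M t n1 n2 k D1 IH1 D2 IH2 E L j t0 H.
    destruct t0; [rewrite lift_const in H; discriminate|rewrite lift_var in H; destruct (Nat.ltb n j); discriminate| |rewrite lift_lam in H; discriminate].
    rewrite lift_app in H. injection H as H1 H2. destruct (IH1 _ _ H1) as (H3 & E3 & D3).
    destruct (IH2 _ _ H2) as (H4 & E4 & D4). exists (cadd H3 H4); split.
    + rewrite E, E3, E4, cins_cadd. reflexivity.
    + eapply t_app; eauto. reflexivity.
  - intros G u k E j t0 H. exists cempty; split; [rewrite E, cins_empty; reflexivity|apply tm_nil; reflexivity].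
  - intros G G1 G2 u s M n1 n2 k D1 IH1 D2 IH2 E L j t0 H.
    destruct (IH1 _ _ H) as (H3 & E3 & D3). destruct (IH2 _ _ H) as (H4 & E4 & D4). exists (cadd H3 H4); split.
    + rewrite E, E3, E4, cins_cadd. reflexivity.
    + eapply tm_cons; eauto. reflexivity. Qed.


Lemma typm_empty_inv G u M m : typm G u M m -> Permutation M [] -> ceq G cempty.
Proof. intros D P. apply (typm_perm P) in D. exact (typm_nil_inv D). Qed.

Lemma typ_subst :
  (forall G a s n, typ G a s n -> forall k u D m, typm D u (G k) m ->
      typ (cadd (cdel k G) D) (subst k u a) s (n + m)) /\
  (forall G a M n, typm G a M n -> forall k u D m, typm D u (G k) m ->
      typm (cadd (cdel k G) D) (subst k u a) M (n + m)).
Proof. apply typ_mut.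
  - intros G j t k0 E k u D m Du. rewrite subst_var. pose proof (E k) as Ek; unfold csing in Ek.
    destruct (Nat.ltb j k) eqn:E1; [|destruct (Nat.eqb j k) eqn:E2].
    + apply Nat.ltb_lt in E1. rewrite (proj2 (Nat.eqb_neq k j)) in Ek by lia.
      apply (typm_empty_inv Du) in Ek. apply t_var. rewrite Ek, cadd_empty_r, E, cdel_sing_lt by lia. reflexivity.
    + apply Nat.eqb_eq in E2; subst j. rewrite Nat.eqb_refl in Ek. apply (typm_perm Ek) in Du.
      destruct (typm_single_inv Du) as (m' & Dm & L). eapply typ_mono; [eapply typ_ceq; [exact Dm|]|lia].
      rewrite E, cdel_sing_eq. symmetry; apply cadd_empty_l.
    + apply Nat.ltb_ge in E1; apply Nat.eqb_neq in E2. rewrite (proj2 (Nat.eqb_neq k j)) in Ek by lia.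
      apply (typm_empty_inv Du) in Ek. apply t_var. rewrite Ek, cadd_empty_r, E, cdel_sing_gt by lia. reflexivity.
  - intros G c t k0 Hc E k u D m Du. rewrite subst_const. pose proof (E k) as Ek.
    apply (typm_empty_inv Du) in Ek. apply t_const; auto. rewrite Ek, E, cadd_empty_r, cdel_empty. reflexivity.
  - intros G G' a M t n k0 Da IH P E L k u D m Du. rewrite subst_lam.
    apply (typm_perm (E k)) in Du. apply (proj2 typ_lift) with (j := 0) in Du.
    specialize (IH (S k) (lift 0 u) _ _ Du).
    eapply t_lam; [exact IH| | |lia].
    + unfold cadd, cdel, cins; simpl. rewrite app_nil_r; exact P.
    + change (ctail (cadd (cdel (S k) G') (cins 0 D))) with (cadd (ctail (cdel (S k) G')) (ctail (cins 0 D))).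
      rewrite ctail_cdel_S, ctail_cins0, E. reflexivity.
  - intros G G1 G2 f u0 M t n1 n2 k0 D1 IH1 D2 IH2 E L k u D m Du.
    rewrite subst_app. apply (typm_perm (E k)) in Du. change (cadd G1 G2 k) with (G1 k ++ G2 k) in Du.
    destruct (typm_split _ _ Du) as (D3 & D4 & m1 & m2 & Du1 & Du2 & ED & LD).
    eapply t_app; [exact (IH1 _ _ _ _ Du1)|exact (IH2 _ _ _ _ Du2)| |lia].
    rewrite E, ED, cdel_cadd. intro i; unfold cadd; psolve.
  - intros G a k0 E k u D m Du. pose proof (E k) as Ek.
    apply (typm_empty_inv Du) in Ek. apply tm_nil. rewrite Ek, E, cadd_empty_r, cdel_empty. reflexivity.
  - intros G G1 G2 a s M n1 n2 k0 D1 IH1 D2 IH2 E L k u D m Du.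
    apply (typm_perm (E k)) in Du. change (cadd G1 G2 k) with (G1 k ++ G2 k) in Du.
    destruct (typm_split _ _ Du) as (D3 & D4 & m1 & m2 & Du1 & Du2 & ED & LD).
    eapply tm_cons; [exact (IH1 _ _ _ _ Du1)|exact (IH2 _ _ _ _ Du2)| |lia].
    rewrite E, ED, cdel_cadd. intro i; unfold cadd; psolve. Qed.


Lemma var_case G k u s n : typ G u s n ->
  exists G1 D n1 m, typ G1 (Var _ k) s n1 /\ typm D u (G1 k) m /\ ceq G (cadd (cdel k G1) D).
Proof. intro Du. exists (csing k s), G, 0, n; split; [apply t_var; reflexivity|split].
  - unfold csing; rewrite Nat.eqb_refl. apply typ_typm; exact Du.
  - rewrite cdel_sing_eq. symmetry; apply cadd_empty_l. Qed.

Lemma subst_var_cases k u j (t : term) : t = subst k u (Var _ j) ->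
  (t = u /\ j = k) \/ (j < k /\ t = Var _ j) \/ (k < j /\ t = Var _ (pred j)).
Proof. rewrite subst_var. intro H. destruct (Nat.ltb j k) eqn:E1; [right; left; split; auto; apply Nat.ltb_lt; auto|].
  destruct (Nat.eqb j k) eqn:E2; [left; split; auto; apply Nat.eqb_eq; auto|].
  right; right; split; auto. apply Nat.ltb_ge in E1; apply Nat.eqb_neq in E2; lia. Qed.

Lemma typ_unsubst :
  (forall G t s n, typ G t s n -> forall k u a, t = subst k u a ->
     exists G1 D n1 m, typ G1 a s n1 /\ typm D u (G1 k) m /\ ceq G (cadd (cdel k G1) D)) /\
  (forall G t M n, typm G t M n -> forall k u a, t = subst k u a ->
     exists G1 D n1 m, typm G1 a M n1 /\ typm D u (G1 k) m /\ ceq G (cadd (cdel k G1) D)).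
Proof. apply typ_mut.
  - intros G n t k0 E k u a H. destruct a as [c|j|a1 a2|b].
    + rewrite subst_const in H; discriminate.
    + apply subst_var_cases in H as [[H1 H2]|[[H1 H2]|[H1 H2]]].
      * subst. eapply var_case with (n := k0). apply t_var; exact E.
      * injection H2 as ->. exists (csing j t), cempty, k0, 0; split; [apply t_var; reflexivity|split].
        -- unfold csing. rewrite (proj2 (Nat.eqb_neq k j)) by lia. apply tm_nil; reflexivity.
        -- rewrite E, cdel_sing_lt, cadd_empty_r by lia. reflexivity.
      * injection H2 as ->. exists (csing j t), cempty, k0, 0; split; [apply t_var; reflexivity|split].
        -- unfold csing. rewrite (proj2 (Nat.eqb_neq k j)) by lia. apply tm_nil; reflexivity.
        -- rewrite E, cdel_sing_gt, cadd_empty_r by lia. reflexivity.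
    + rewrite subst_app in H; discriminate.
    + rewrite subst_lam in H; discriminate.
  - intros G c t k0 Hc E k u a H. destruct a as [c'|j|a1 a2|b].
    + rewrite subst_const in H. injection H as ->. exists cempty, cempty, k0, 0; split; [apply t_const; auto; reflexivity|split].
      * apply tm_nil; reflexivity.
      * rewrite E, cdel_empty, cadd_empty_l. reflexivity.
    + apply subst_var_cases in H as [[H1 H2]|[[H1 H2]|[H1 H2]]]; try discriminate.
      subst. eapply var_case with (n := k0). apply t_const; auto.
    + rewrite subst_app in H; discriminate.
    + rewrite subst_lam in H; discriminate.
  - intros G G' a0 M t n k0 Da IH P E L k u a H. destruct a as [c'|j|a1 a2|b].
    + rewrite subst_const in H; discriminate.
    + apply subst_var_cases in H as [[H1 H2]|[[H1 H2]|[H1 H2]]]; try discriminate.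
      subst. eapply var_case with (n := k0). eapply t_lam; eauto.
    + rewrite subst_app in H; discriminate.
    + rewrite subst_lam in H. injection H as H.
      destruct (IH _ _ _ H) as (G1' & D' & n1 & m & Db & Dl & E').
      destruct ((proj2 typ_unlift) _ _ _ _ Dl 0 u eq_refl) as (D'' & ED & Du).
      exists (ctail G1'), D'', (S n1), m; split; [|split].
      * eapply t_lam; [exact Db| |reflexivity|lia]. rewrite P, (E' 0). unfold cadd. rewrite (ED 0).
        unfold cdel, cins; simpl. rewrite app_nil_r; reflexivity.
      * exact Du.
      * rewrite E, E', ED.
        change (ctail (cadd (cdel (S k) G1') (cins 0 D''))) with (cadd (ctail (cdel (S k) G1')) (ctail (cins 0 D''))).
        rewrite ctail_cdel_S, ctail_cins0. reflexivity.
  - intros G G1 G2 f u0 M t n1 n2 k0 D1 IH1 D2 IH2 E L k u a H. destruct a as [c'|j|a1 a2|b].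
    + rewrite subst_const in H; discriminate.
    + apply subst_var_cases in H as [[H1 H2]|[[H1 H2]|[H1 H2]]]; try discriminate.
      subst. eapply var_case with (n := k0). eapply t_app; eauto.
    + rewrite subst_app in H. injection H as H1 H2.
      destruct (IH1 _ _ _ H1) as (H3 & D3 & m1 & p1 & Da1 & Du1 & E1).
      destruct (IH2 _ _ _ H2) as (H4 & D4 & m2 & p2 & Da2 & Du2 & E2).
      exists (cadd H3 H4), (cadd D3 D4), (S (m1 + m2)), (p1 + p2); split; [|split].
      * eapply t_app; eauto. reflexivity.
      * apply typm_app; assumption.
      * rewrite E, E1, E2, cdel_cadd. intro i; unfold cadd; psolve.
    + rewrite subst_lam in H; discriminate.
  - intros G a0 k0 E k u a H. exists cempty, cempty, 0, 0; split; [apply tm_nil; reflexivity|split].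
    + apply tm_nil; reflexivity.
    + rewrite E, cdel_empty, cadd_empty_l. reflexivity.
  - intros G G1 G2 a0 s M n1 n2 k0 D1 IH1 D2 IH2 E L k u a H.
      destruct (IH1 _ _ _ H) as (H3 & D3 & m1 & p1 & Da1 & Du1 & E1).
      destruct (IH2 _ _ _ H) as (H4 & D4 & m2 & p2 & Da2 & Du2 & E2).
      exists (cadd H3 H4), (cadd D3 D4), (m1 + m2), (p1 + p2); split; [|split].
      * eapply tm_cons; eauto. reflexivity.
      * apply typm_app; assumption.
      * rewrite E, E1, E2, cdel_cadd. intro i; unfold cadd; psolve. Qed.

Lemma redex_expand G s u t n : typ G (subst 0 u s) t n -> exists n', typ G (App (Lam s) u) t n'.
Proof. intro D. destruct ((proj1 typ_unsubst) _ _ _ _ D 0 u s eq_refl) as (G1 & D1 & n1 & m & Ds & Du & E).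
  exists (S (S n1 + m)). apply t_app with (G1 := ctail G1) (G2 := D1) (M := G1 0) (n1 := S n1) (n2 := m).
  - eapply t_lam; [exact Ds|reflexivity|reflexivity|lia].
  - exact Du.
  - rewrite E, cdel0. reflexivity.
  - lia. Qed.

Lemma redex_reduce G s u t n : typ G (App (Lam s) u) t n -> exists n', n' < n /\ typ G (subst 0 u s) t n'.
Proof. intro D. apply typ_app_inv in D as (G1 & G2 & M & n1 & n2 & D1 & D2 & E & L).
  apply typ_lam_inv in D1 as (G' & M' & t' & n' & Heq & Ds & P & E1 & L1). injection Heq as -> ->.
  apply (typm_perm P) in D2. exists (n' + n2); split; [lia|].
  eapply typ_ceq; [exact ((proj1 typ_subst) _ _ _ _ Ds 0 u _ _ D2)|]. rewrite E, E1, cdel0. reflexivity. Qed.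


Lemma typm_map (a b : term) N : (forall G s k, k <= N -> typ G a s k -> exists m, typ G b s m) ->
  forall M G k, k <= N -> typm G a M k -> exists m, typm G b M m.
Proof. intros H M; induction M as [|x M IH]; intros G k L D.
  - exists 0. apply tm_nil. exact (typm_nil_inv D).
  - apply typm_cons_inv in D as (G1 & G2 & n1 & n2 & D1 & D2 & E & L2).
    destruct (H _ _ n1 ltac:(lia) D1) as (m1 & D1'). destruct (IH _ n2 ltac:(lia) D2) as (m2 & D2').
    exists (m1 + m2). eapply tm_cons; eauto. Qed.

Lemma compat_pres (R : term -> term -> Prop) :
  (forall t t' G s n, R t t' -> typ G t s n -> typ G t' s n) ->
  forall t t', compat R t t' -> forall G s n, typ G t s n -> typ G t' s n.
Proof. intros HR t t' Hc; induction Hc; intros G s0 n D.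
  - eapply HR; eauto.
  - apply typ_app_inv in D as (G1 & G2 & M & n1 & n2 & D1 & D2 & E & L).
    eapply t_app; [apply IHHc; exact D1|apply ((proj2 typ_bisim) _ _ _ _ D2); assumption|exact E|exact L].
  - apply typ_app_inv in D as (G1 & G2 & M & n1 & n2 & D1 & D2 & E & L).
    assert (D2' : typm G2 s' M n2).
    { clear E L D1. revert G2 n2 D2; induction M as [|x M IH]; intros G2 n2 D2.
      - apply tm_nil; exact (typm_nil_inv D2).
      - apply typm_cons_inv in D2 as (G3 & G4 & m1 & m2 & D3 & D4 & E & L).
        eapply tm_cons; [apply IHHc; exact D3|apply IH; exact D4|exact E|exact L]. }
    eapply t_app; [apply ((proj1 typ_bisim) _ _ _ _ D1); assumption|exact D2'|exact E|exact L].
  - apply typ_lam_inv in D as (G' & M & t1 & n' & -> & Da & P & E & L).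
    eapply t_lam; eauto. Qed.

Lemma compat_exp (R : term -> term -> Prop) :
  (forall t t' G s n, R t t' -> typ G t' s n -> exists n', typ G t s n') ->
  forall t t', compat R t t' -> forall G s n, typ G t' s n -> exists n', typ G t s n'.
Proof. intros HR t t' Hc; induction Hc; intros G s0 n D.
  - eapply HR; eauto.
  - apply typ_app_inv in D as (G1 & G2 & M & n1 & n2 & D1 & D2 & E & L).
    destruct (IHHc _ _ _ D1) as (n1' & D1').
    exists (S (n1' + n2)). eapply t_app; [exact D1'|apply ((proj2 typ_bisim) _ _ _ _ D2); apply bisim_sym; assumption|exact E|lia].
  - apply typ_app_inv in D as (G1 & G2 & M & n1 & n2 & D1 & D2 & E & L).
    destruct (@typm_map s' s n2 (fun G s k _ D => IHHc G s k D) M G2 n2 (le_n _) D2) as (m & D2').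
    exists (S (n1 + m)). eapply t_app; [apply ((proj1 typ_bisim) _ _ _ _ D1); apply bisim_sym; assumption|exact D2'|exact E|lia].
  - apply typ_lam_inv in D as (G' & M & t1 & n' & -> & Da & P & E & L).
    destruct (IHHc _ _ _ Da) as (m & Da'). exists (S m). eapply t_lam; eauto. Qed.

Lemma beta_sr t t' G s n : beta_step t t' -> typ G t s n -> typ G t' s n.
Proof. intros H D; revert H G s n D; apply compat_pres.
  intros a b G s n (s0 & u & B1 & B2) D.
  apply ((proj1 typ_bisim) _ _ _ _ D) in B1. destruct (redex_reduce B1) as (n' & L & D').
  apply ((proj1 typ_bisim) _ _ _ _ (typ_mono D' (Nat.lt_le_incl _ _ L))). apply bisim_sym; exact B2. Qed.

Lemma beta_exp t t' G s n : beta_step t t' -> typ G t' s n -> exists n', typ G t s n'.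
Proof. intros H D; revert H G s n D; apply compat_exp.
  intros a b G s n (s0 & u & B1 & B2) D.
  apply ((proj1 typ_bisim) _ _ _ _ D) in B2. destruct (@redex_expand _ _ _ _ _ B2) as (n' & D').
  exists n'. apply ((proj1 typ_bisim) _ _ _ _ D'). apply bisim_sym; exact B1. Qed.

Inductive head_step : term -> term -> Prop :=
| hs_beta a u : head_step (App (Lam a) u) (subst 0 u a)
| hs_app f f' u : head_step f f' -> head_step (App f u) (App f' u)
| hs_lam a a' : head_step a a' -> head_step (Lam a) (Lam a').

Lemma head_beta t t' : head_step t t' -> beta_step t t'.
Proof. induction 1.
  - apply cp_base. exists a, u; split; apply bisim_refl.
  - apply cp_appl; [assumption|apply bisim_refl].
  - apply cp_lam; assumption. Qed.

Lemma head_sr t t' : head_step t t' -> forall G s n, typ G t s n -> exists n', n' < n /\ typ G t' s n'.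
Proof. induction 1; intros G s n D.
  - apply redex_reduce; exact D.
  - apply typ_app_inv in D as (G1 & G2 & M & n1 & n2 & D1 & D2 & E & L).
    destruct (IHhead_step _ _ _ D1) as (n1' & L1 & D1').
    exists (S (n1' + n2)); split; [lia|]. eapply t_app; eauto.
  - apply typ_lam_inv in D as (G' & M & t1 & n' & -> & Da & P & E & L).
    destruct (IHhead_step _ _ _ Da) as (m & L1 & Da'). exists (S m); split; [lia|]. eapply t_lam; eauto. Qed.

Lemma progress G t s n : typ G t s n -> is_hnf bot t \/ exists t', head_step t t'.
Proof. induction 1.
  - left; apply hnf_head; apply ha_var.
  - left; apply hnf_head; apply ha_const; assumption.
  - destruct IHtyp as [Hh|[t' Hh]]; [left; apply hnf_lam; exact Hh|right; exists (Lam t'); apply hs_lam; exact Hh].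
  - destruct IHtyp as [Hh|[t' Hh]].
    + inversion Hh; subst.
      * left; apply hnf_head; apply ha_app; assumption.
      * right; eexists; apply hs_beta.
    + right; exists (App t' u); apply hs_app; exact Hh. Qed.

Lemma typ_has_hnf n : forall G t s, typ G t s n -> has_hnf bot t.
Proof. induction n as [n IH] using (well_founded_induction lt_wf). intros G t s D.
  destruct (progress D) as [H|[t' H]].
  - exists t; split; [apply star_refl; apply bisim_refl|exact H].
  - destruct (head_sr H D) as (n' & L & D'). destruct (IH _ L _ _ _ D') as (t'' & S1 & S2).
    exists t''; split; [eapply star_step; [apply head_beta; exact H|exact S1]|exact S2]. Qed.

Lemma bb_sr t t' G s n : beta_bot_step bot t t' -> typ G t s n -> typ G t' s n.
Proof. intros H D; revert H G s n D; apply compat_pres.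
  intros a b G s n [(s0 & u & B1 & B2)|(Hn & _ & _)] D.
  - apply ((proj1 typ_bisim) _ _ _ _ D) in B1. destruct (redex_reduce B1) as (n' & L & D').
    apply ((proj1 typ_bisim) _ _ _ _ (typ_mono D' (Nat.lt_le_incl _ _ L))). apply bisim_sym; exact B2.
  - exfalso; apply Hn. exact (typ_has_hnf D). Qed.

Lemma bbstar_sr t t' : beta_bot_star bot t t' -> forall G s n, typ G t s n -> typ G t' s n.
Proof. induction 1; intros G s0 n D.
  - apply ((proj1 typ_bisim) _ _ _ _ D); assumption.
  - apply IHstar. eapply bb_sr; eauto. Qed.

Lemma head_app_typ t : head_app bot t -> forall s, exists G n, typ G t s n.
Proof. induction 1; intro sg.
  - exists (csing n sg), 0; apply t_var; reflexivity.
  - exists cempty, 0; apply t_const; auto; reflexivity.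
  - destruct (IHhead_app (Arr [] sg)) as (G & n & D). exists G, (S n).
    eapply t_app with (n2 := 0); [exact D|apply tm_nil; reflexivity| |lia]. symmetry; apply cadd_empty_r. Qed.

Lemma hnf_typ t : is_hnf bot t -> exists G s n, typ G t s n.
Proof. induction 1.
  - destruct (head_app_typ H Base) as (G & n & D); eauto.
  - destruct IHis_hnf as (G & s0 & n & D). exists (ctail G), (Arr (G 0) s0), (S n).
    eapply t_lam; eauto; reflexivity. Qed.

Lemma has_hnf_typ t : has_hnf bot t -> exists G s n, typ G t s n.
Proof. intros (t' & S1 & H). apply hnf_typ in H. induction S1.
  - destruct H as (G & s0 & n & D). exists G, s0, n. apply ((proj1 typ_bisim) _ _ _ _ D); apply bisim_sym; assumption.
  - destruct (IHS1 H) as (G & s0 & n & D). destruct (beta_exp H0 D) as (n' & D'). eauto. Qed.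

Lemma inf_typ n : forall G t s, typ G t s n -> forall r, inf_red bot t r -> exists m, typ G r s m.
Proof. induction n as [n IH] using (well_founded_induction lt_wf). intros G t s D r Hr.
  destruct Hr as [t k St|t c St|t t1 t2 t1' t2' St R1 R2|t a a' St R1].
  - exists n. exact (bbstar_sr St D).
  - exists n. exact (bbstar_sr St D).
  - apply (bbstar_sr St) in D. apply typ_app_inv in D as (G1 & G2 & M & n1 & n2 & D1 & D2 & E & L).
    destruct (IH n1 ltac:(lia) _ _ _ D1 _ R1) as (m1 & D1').
    destruct (@typm_map t2 t2' n2 (fun G s k Lk Dk => IH k ltac:(lia) G t2 s Dk t2' R2) M G2 n2 (le_n _) D2) as (m2 & D2').
    exists (S (m1 + m2)). eapply t_app; eauto.
  - apply (bbstar_sr St) in D. apply typ_lam_inv in D as (G' & M & t1 & n' & -> & Da & P & E & L).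
    destruct (IH n' L _ _ _ Da _ R1) as (m & Da'). exists (S m). eapply t_lam; eauto. Qed.

End S.

Theorem corollary5p31 (C : Type) (bot : C) (s t : term C) :
  ~ has_hnf bot s -> inf_red bot t s -> ~ has_hnf bot t.
Proof. intros Hs Hr Ht. destruct (has_hnf_typ Ht) as (G & sg & n & D).
  destruct (inf_typ D Hr) as (m & D'). apply Hs. exact (typ_has_hnf D'). Qed.
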